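(* Let $\mathcal{X}=\langle P,K,V\rangle$ be a polyhedral model. Every simplicial bisimulation $\sim\subseteq P\times P$ is included in logical equivalence: if $x\sim y$ then for every SLCS formula $\phi$, $\mathcal{X},x\models\phi\iff\mathcal{X},y\models\phi$.
   Context: A $d$-simplex $\sigma\subseteq\mathbb{R}^m$ is the convex hull of $d+1$ affinely independent points $v_0,\dots,v_d$ (its vertices); the simplexes spanned by subsets of the vertices (including the empty simplex) are its faces, and $\tau\preceq\sigma$ means $\tau$ is a face of $\sigma$. The relative interior of $\sigma$ is $\tilde\sigma=\{\sum_i\lambda_iv_i:\lambda_i\in(0,1],\sum_i\lambda_i=1\}$. A simplicial complex $K$ is a finite set of simplexes of $\mathbb{R}^m$ closed under taking faces and such that the intersection of any two of its simplexes is a face of both. Its polyhedron is $|K|=\bigcup K$, with the subspace topology of $\mathbb{R}^m$; $\mathcal{C}$ and $\mathcal{I}$ denote closure and interior in this space. The cells of $K$ are the sets $\tilde\sigma$ for nonempty $\sigma\in K$; they form a partition $\tilde K$ of $|K|$. A path in a space $P$ is a continuous $\pi:[0,1]\to P$; $\pi(S)=\{\pi(s):s\in S\}$. Fix a finite set $AP$ of atomic propositions. A polyhedral model is $\mathcal{X}=\langle P,K,V\rangle$ with $K$ a simplicial complex, $P=|K|$, and $V:AP\to\mathcal{P}(P)$ such that each $V(p)$ is a union of cells of $K$ ($K$ is then called coherent with the model). SLCS formulas: $\phi::=\top\mid p\mid\neg\phi\mid\phi\wedge\phi\mid\Box\phi\mid\gamma(\phi,\phi)$, $p\in AP$. Semantics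 at $x\in P$, with $[\![\phi]\!]=\{x\in P:\mathcal{X},x\models\phi\}$: $\top$ always holds; $x\models p$ iff $x\in V(p)$; Boolean connectives as usual; $x\models\Box\phi$ iff $x\in\mathcal{I}([\![\phi]\!])$; $x\models\gamma(\phi,\psi)$ iff there is a path $\pi$ in $P$ with $\pi(0)=x$, $\pi((0,1))\subseteq[\![\phi]\!]$ and $\pi(1)\in[\![\psi]\!]$. A path $\pi$ is simplicial (w.r.t. $K$) if there are $s_0=0<s_1<\dots<s_k=1$ and cells $\tilde\sigma_1,\dots,\tilde\sigma_k$ of $K$ with $\pi((s_{i-1},s_i))\subseteq\tilde\sigma_i$ for all $i$. For $R\subseteq P\times P$, paths satisfy $\pi_1\hat R\pi_2$ iff $\pi_1(t)\,R\,\pi_2(t)$ for all $t\in[0,1]$. A relation $\sim\subseteq P\times P$ is a simplicial bisimulation if whenever $x\sim y$: (1) for all $p\in AP$, $x\in V(p)\iff y\in V(p)$; (2) for every simplicial path $\pi_x$ with $\pi_x(0)=x$ there is a simplicial path $\pi_y$ with $\pi_y(0)=y$ and $\pi_x\hat\sim\pi_y$; (3) for every simplicial path $\pi_y$ with $\pi_y(0)=y$ there is a simplicial path $\pi_x$ with $\pi_x(0)=x$ and $\pi_x\hat\sim\pi_y$. *)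

(* Defs.v *)
From Stdlib Require Import Reals List.
From mathcomp Require Import ssreflect ssrbool eqtype fintype.
Import ListNotations.
Set Implicit Arguments.
Local Open Scope R_scope.

Section Polyhedra.
Variable m : nat.

Definition Point := 'I_m -> R.

Definition close (x y : Point) (eps : R) : Prop :=
  forall j : 'I_m, Rabs (x j - y j) < eps.

Definition simplex := list Point.

Fixpoint comb (lam : nat -> R) (vs : simplex) : Point :=
  match vs with
  | [] => fun _ => 0
  | v :: vs' => fun j => lam 0%nat * v j + comb (fun i => lam (S i)) vs' j
  end.

Fixpoint sum_first (lam : nat -> R) (n : nat) : R :=
  match n with
  | O => 0
  | S n' => sum_first lam n' + lam n'
  end.

Definition aff_indep (vs : simplex) : Prop :=
  forall lam : nat -> R,
    sum_first lam (length vs) = 0 ->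
    (forall j, comb lam vs j = 0) ->
    forall i, (lt i (length vs)) -> lam i = 0.

Definition hull (vs : simplex) (x : Point) : Prop :=
  exists lam : nat -> R,
    (forall i, (lt i (length vs)) -> 0 <= lam i) /\
    sum_first lam (length vs) = 1 /\
    (forall j, x j = comb lam vs j).

Definition relint (vs : simplex) (x : Point) : Prop :=
  exists lam : nat -> R,
    (forall i, (lt i (length vs)) -> 0 < lam i /\ lam i <= 1) /\
    sum_first lam (length vs) = 1 /\
    (forall j, x j = comb lam vs j).

Definition face (tau sigma : simplex) : Prop := incl tau sigma.

Definition simplicial_complex (K : list simplex) : Prop :=
  (forall s, In s K -> aff_indep s) /\
  (forall s tau, In s K -> face tau s ->
     exists tau', In tau' K /\ incl tau tau' /\ incl tau' tau) /\
  (forall s1 s2, In s1 K -> In s2 K ->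
     exists tau, face tau s1 /\ face tau s2 /\
       (forall x, (hull s1 x /\ hull s2 x) <-> hull tau x)).

Definition polyhedron (K : list simplex) (x : Point) : Prop :=
  exists s, In s K /\ hull s x.

Definition is_cell (K : list simplex) (s : simplex) : Prop :=
  In s K /\ s <> [].

Definition interior (K : list simplex) (S : Point -> Prop) (x : Point) : Prop :=
  polyhedron K x /\
  exists eps, 0 < eps /\ forall y, polyhedron K y -> close y x eps -> S y.

(** Paths in |K|: continuous maps [0,1] -> |K| (values outside [0,1] are irrelevant). *)
Definition is_path (K : list simplex) (pi : R -> Point) : Prop :=
  (forall t, 0 <= t <= 1 -> polyhedron K (pi t)) /\
  (forall t, 0 <= t <= 1 -> forall eps, 0 < eps ->
     exists delta, 0 < delta /\
       forall s, 0 <= s <= 1 -> Rabs (s - t) < delta -> close (pi s) (pi t) eps).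

Definition simplicial_path (K : list simplex) (pi : R -> Point) : Prop :=
  is_path K pi /\
  exists (k : nat) (s : nat -> R) (c : nat -> simplex),
    s 0%nat = 0 /\ s k = 1 /\
    (forall i, (lt i k) -> s i < s (S i)) /\
    (forall i, (lt i k) ->
       is_cell K (c i) /\
       forall t, s i < t < s (S i) -> relint (c i) (pi t)).

Variable AP : finType.

Definition coherent (K : list simplex) (V : AP -> Point -> Prop) : Prop :=
  forall p x, V p x ->
    exists s, is_cell K s /\ relint s x /\ (forall y, relint s y -> V p y).

Inductive form : Type :=
  | FTop : form
  | FAtom : AP -> form
  | FNeg : form -> form
  | FAnd : form -> form -> form
  | FBox : form -> form
  | FGamma : form -> form -> form.

(** Semantics (meaningful at points of |K|). *)
Fixpoint sat (K : list simplex) (V : AP -> Point -> Prop) (x : Point) (phi : form)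
  : Prop :=
  match phi with
  | FTop => True
  | FAtom p => V p x
  | FNeg f => ~ sat K V x f
  | FAnd f g => sat K V x f /\ sat K V x g
  | FBox f => interior K (fun y => sat K V y f) x
  | FGamma f g =>
      exists pi, is_path K pi /\ pi 0 = x /\
        (forall t, 0 < t < 1 -> sat K V (pi t) f) /\
        sat K V (pi 1) g
  end.

Definition simplicial_bisim (K : list simplex) (V : AP -> Point -> Prop)
    (Rel : Point -> Point -> Prop) : Prop :=
  forall x y, Rel x y ->
    (forall p, V p x <-> V p y) /\
    (forall pix, simplicial_path K pix -> pix 0 = x ->
       exists piy, simplicial_path K piy /\ piy 0 = y /\
         forall t, 0 <= t <= 1 -> Rel (pix t) (piy t)) /\
    (forall piy, simplicial_path K piy -> piy 0 = y ->
       exists pix, simplicial_path K pix /\ pix 0 = x /\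
         forall t, 0 <= t <= 1 -> Rel (pix t) (piy t)).

End Polyhedra.

Arguments coherent [m AP] K V.
Arguments simplicial_bisim [m AP] K V Rel.
Arguments FTop {AP}.
Arguments FAtom [AP] _.
Arguments polyhedron [m] K x.
Arguments simplicial_complex [m] K.
Arguments is_path [m] K pi.
Arguments simplicial_path [m] K pi.
Arguments interior [m] K S x.

(* Main.v *)
Require Import Defs.
From mathcomp Require Import ssreflect ssrbool eqtype seq fintype.
From Stdlib Require Import Reals List Permutation Lra Lia Classical ClassicalEpsilon FunctionalExtensionality.
Import ListNotations.
Local Open Scope R_scope.

Section Geo.
Variable m : nat.
Notation Pt := (Point m).

Definition lin (a : R) (p : Pt) (b : R) (q : Pt) : Pt := fun j => a * p j + b * q j.

Lemma sum_first_lin a b lam mu n :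
  sum_first (fun i => a * lam i + b * mu i) n = a * sum_first lam n + b * sum_first mu n.
Proof. induction n; simpl; [lra|rewrite IHn; ring]. Qed.

Lemma sum_first_S lam n : sum_first lam (S n) = lam 0%nat + sum_first (fun i => lam (S i)) n.
Proof. induction n; simpl in *; [lra|]. rewrite IHn; simpl; ring. Qed.

Lemma sum_first_ext lam mu n : (forall i, (i < n)%nat -> lam i = mu i) ->
  sum_first lam n = sum_first mu n.
Proof. induction n; simpl; intros H; [lra|]. rewrite IHn; [|intros; apply H; lia]. rewrite H; [lra|lia]. Qed.

Lemma sum_first_nonneg lam n : (forall i, (i < n)%nat -> 0 <= lam i) -> 0 <= sum_first lam n.
Proof. induction n; simpl; intros H; [lra|]. have := H n ltac:(lia). have := IHn ltac:(intros; apply H; lia). lra. Qed.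

Lemma sum_first_le lam n i : (forall i, (i < n)%nat -> 0 <= lam i) -> (i < n)%nat -> lam i <= sum_first lam n.
Proof. induction n; simpl; intros H Hi; [lia|].
  have := sum_first_nonneg lam n ltac:(intros; apply H; lia).
  destruct (Nat.eq_dec i n) as [->|Hne]; [lra|].
  have := IHn ltac:(intros; apply H; lia) ltac:(lia). have := H n ltac:(lia). lra. Qed.

Lemma sum_first_zero lam n : (forall i, (i < n)%nat -> 0 <= lam i) -> sum_first lam n = 0 ->
  forall i, (i < n)%nat -> lam i = 0.
Proof. intros H H0 i Hi. have := sum_first_le lam n i H Hi. have := H i Hi. lra. Qed.

Lemma comb_lin a b lam mu (vs : simplex m) j :
  comb (fun i => a * lam i + b * mu i) vs j = a * comb lam vs j + b * comb mu vs j.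
Proof. revert lam mu; induction vs as [|v vs IH]; intros lam mu; simpl; [ring|].
  rewrite (IH (fun i => lam (S i)) (fun i => mu (S i))). ring. Qed.

Lemma comb_ext lam mu (vs : simplex m) j : (forall i, (i < length vs)%nat -> lam i = mu i) ->
  comb lam vs j = comb mu vs j.
Proof. revert lam mu; induction vs as [|v vs IH]; intros lam mu H; simpl; [ring|].
  rewrite (H 0%nat) /=; [|lia]. rewrite (IH (fun i => lam (S i)) (fun i => mu (S i))); [ring|].
  intros i Hi; apply H; simpl; lia. Qed.

Lemma comb_zero (vs : simplex m) j : comb (fun _ => 0) vs j = 0.
Proof. induction vs; simpl; [ring|]. rewrite IHvs; ring. Qed.

Lemma comb_scal c lam (vs : simplex m) j : comb (fun i => c * lam i) vs j = c * comb lam vs j.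
Proof. have := comb_lin c 0 lam (fun _ => 0) vs j. rewrite comb_zero.
  have E: comb (fun i => c * lam i + 0 * 0) vs j = comb (fun i => c * lam i) vs j.
  { apply comb_ext; intros; ring. } rewrite E. lra. Qed.

Lemma hull_ext (s : simplex m) x y : (forall j, x j = y j) -> hull s x -> hull s y.
Proof. intros E [lam [H1 [H2 H3]]]; exists lam; split; [|split]; auto. intros j; rewrite -E; auto. Qed.

Lemma relint_ext (s : simplex m) x y : (forall j, x j = y j) -> relint s x -> relint s y.
Proof. intros E [lam [H1 [H2 H3]]]; exists lam; split; [|split]; auto. intros j; rewrite -E; auto. Qed.

Lemma relint_hull (s : simplex m) x : relint s x -> hull s x.
Proof. intros [lam [H1 [H2 H3]]]; exists lam; split; [|split]; auto. intros i Hi; have := H1 i Hi; lra. Qed.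

Lemma hull_nil x : ~ hull (m:=m) [] x.
Proof. intros [lam [_ [H _]]]; simpl in H; lra. Qed.

Lemma sum_first_0 n : sum_first (fun _ => 0) n = 0.
Proof. induction n; simpl; lra. Qed.

Lemma hull_vertex v (s : simplex m) : hull (v :: s) v.
Proof. exists (fun i => if i is O then 1 else 0). split; [|split].
  - intros [|i] _; lra.
  - cbn [length]; rewrite sum_first_S (sum_first_0 (length s)); ring.
  - intros j; simpl. rewrite (comb_zero s j); ring. Qed.

Lemma relint_single v : relint (m:=m) [v] v.
Proof. exists (fun _ => 1). split; [|split]. intros; lra. simpl; ring. intros j; simpl; ring. Qed.

Lemma hull_cons_inv v (s : simplex m) z : hull (v :: s) z ->
  exists a w, 0 <= a <= 1 /\ (a = 0 \/ hull s w) /\ forall j, z j = (1 - a) * v j + a * w j.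
Proof. intros [lam [H1 [H2 H3]]]. cbn [length] in H2; rewrite sum_first_S in H2.
  have Hnn : forall i, (i < length s)%nat -> 0 <= lam (S i) by intros i Hi; apply H1; simpl; lia.
  have Hs := sum_first_nonneg _ _ Hnn. have H0 := H1 0%nat ltac:(simpl; lia).
  set a := sum_first (fun i => lam (S i)) (length s) in H2 Hs.
  destruct (Req_dec a 0) as [Ha|Ha].
  - exists 0, v. split; [lra|split; [auto|]]. intros j. rewrite H3 /=.
    rewrite (comb_ext (fun i => lam (S i)) (fun _ => 0)); last first.
    { intros i Hi; apply (sum_first_zero _ _ Hnn Ha i Hi). }
    rewrite comb_zero. have -> : lam 0%nat = 1 by lra. ring.
  - exists a, (comb (fun i => / a * lam (S i)) s). split; [lra|split].
    + right. exists (fun i => / a * lam (S i)). split; [|split].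
      * intros i Hi; have := Hnn i Hi; have : 0 < / a by apply Rinv_0_lt_compat; lra. nra.
      * have := sum_first_lin (/ a) 0 (fun i => lam (S i)) (fun _ => 0) (length s).
        rewrite (sum_first_ext (fun i => / a * lam (S i) + 0 * 0) (fun i => / a * lam (S i))); [|intros; ring].
        intros ->. fold a. field_simplify; [|lra]. reflexivity.
      * auto.
    + intros j. rewrite H3 /= comb_scal. have -> : lam 0%nat = 1 - a by lra. field. lra.
Qed.

Lemma hull_cons_intro v (s : simplex m) a w : 0 <= a <= 1 -> hull s w ->
  hull (v :: s) (lin (1 - a) v a w).
Proof. intros Ha [lam [H1 [H2 H3]]].
  exists (fun i => if i is S k then a * lam k else 1 - a). split; [|split].
  - intros [|i] Hi; [lra|]. have := H1 i ltac:(simpl in Hi; lia). nra.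
  - cbn [length]; rewrite sum_first_S. rewrite (sum_first_ext _ (fun i => a * lam i + 0 * 0)); [|intros; ring].
    rewrite sum_first_lin H2. ring.
  - intros j; rewrite /lin /=. rewrite (comb_ext _ (fun i => a * lam i + 0 * 0)); [|intros; ring].
    rewrite comb_lin comb_zero -H3. ring.
Qed.

Lemma relint_cons_intro v (s : simplex m) a w : 0 < a < 1 -> relint s w ->
  relint (v :: s) (lin (1 - a) v a w).
Proof. intros Ha [lam [H1 [H2 H3]]].
  exists (fun i => if i is S k then a * lam k else 1 - a). split; [|split].
  - intros [|i] Hi; [lra|]. have := H1 i ltac:(simpl in Hi; lia). intros [? ?]; split; nra.
  - cbn [length]; rewrite sum_first_S. rewrite (sum_first_ext _ (fun i => a * lam i + 0 * 0)); [|intros; ring].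
    rewrite sum_first_lin H2. ring.
  - intros j; rewrite /lin /=. rewrite (comb_ext _ (fun i => a * lam i + 0 * 0)); [|intros; ring].
    rewrite comb_lin comb_zero -H3. ring.
Qed.

Lemma in_seq_In (T : eqType) (x : T) (s : seq.seq T) : x \in s -> List.In x s.
Proof. induction s as [|y s IH]; [by []|]. rewrite seq.in_cons => /orP [/eqP ->|H]; [left; auto|right; auto]. Qed.

Lemma In_enum (j : 'I_m) : List.In j (enum 'I_m).
Proof. apply in_seq_In. by rewrite mem_enum. Qed.

Lemma fin_max (f : 'I_m -> R) : exists B, forall j, f j <= B.
Proof.
  have H : forall l : list 'I_m, exists B, forall j, List.In j l -> f j <= B.
  { induction l as [|a l [B HB]]; [exists 0; intros j []|].
    exists (Rmax (f a) B). intros j [->|Hj]; [apply Rmax_l|]. eapply Rle_trans; [apply HB; auto|apply Rmax_r]. }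
  destruct (H (enum 'I_m)) as [B HB]. exists B; intros j; apply HB, In_enum. Qed.

Lemma fin_min (f : 'I_m -> R) : (forall j, 0 < f j) -> exists e, 0 < e /\ forall j, e <= f j.
Proof. intros Hp.
  have H : forall l : list 'I_m, exists e, 0 < e /\ forall j, List.In j l -> e <= f j.
  { induction l as [|a l [e [He HB]]]; [exists 1; split; [lra|intros j []]|].
    exists (Rmin (f a) e). split; [apply Rmin_glb_lt; auto|].
    intros j [->|Hj]; [apply Rmin_l|]. eapply Rle_trans; [apply Rmin_r|apply HB; auto]. }
  destruct (H (enum 'I_m)) as [e [He HB]]. exists e; split; auto; intros j; apply HB, In_enum. Qed.

Lemma close_sym x y e : close (m:=m) x y e -> close y x e.
Proof. intros H j. rewrite Rabs_minus_sym; apply H. Qed.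

Lemma close_trans x y z a b : close (m:=m) x y a -> close y z b -> close x z (a + b).
Proof. intros H1 H2 j. have E : x j - z j = (x j - y j) + (y j - z j) by ring.
  rewrite E. eapply Rle_lt_trans; [apply Rabs_triang|]. have := H1 j; have := H2 j; lra. Qed.

Lemma close_mono x y a b : close (m:=m) x y a -> a <= b -> close x y b.
Proof. intros H Hab j; have := H j; lra. Qed.

Lemma close_refl x e : 0 < e -> close (m:=m) x x e.
Proof. intros He j. rewrite Rminus_diag Rabs_R0; auto. Qed.

Lemma hull_bounded (s : simplex m) : exists B, 0 <= B /\ forall w, hull s w -> forall j, Rabs (w j) <= B.
Proof. induction s as [|v s [B [HB0 HB]]].
  - exists 0; split; [lra|]. intros w Hw; exfalso; exact (hull_nil _ Hw).
  - destruct (fin_max (fun j => Rabs (v j))) as [Bv HBv].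
    exists (Rmax Bv B). split; [eapply Rle_trans; [apply HB0|apply Rmax_r]|].
    intros z Hz j. destruct (hull_cons_inv _ _ _ Hz) as [a [w [Ha [Hw Hzj]]]].
    rewrite Hzj. have Hv := HBv j. have M1 := Rmax_l Bv B. have M2 := Rmax_r Bv B.
    destruct Hw as [->|Hw].
    + have -> : (1 - 0) * v j + 0 * w j = v j by ring. lra.
    + have Hwj := HB w Hw j. eapply Rle_trans; [apply Rabs_triang|].
      rewrite !Rabs_mult (Rabs_right a) ?(Rabs_right (1 - a)); try lra. nra.
Qed.

Lemma lt_eps_0 x : (forall eps, 0 < eps -> Rabs x < eps) -> x = 0.
Proof. intros H. destruct (Req_dec x 0) as [|Hx]; auto. have := H (Rabs x) (Rabs_pos_lt _ Hx). lra. Qed.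

Lemma inv_small d : 0 < d -> exists N, forall p, (N <= p)%nat -> / (INR p + 1) < d.
Proof. intros Hd. destruct (INR_unbounded (/ d)) as [N HN]. exists N. intros p Hp.
  have HpN := le_INR _ _ Hp. have Hid : 0 < / d by apply Rinv_0_lt_compat.
  rewrite -(Rinv_inv d). apply Rinv_lt_contravar; [|lra]. apply Rmult_lt_0_compat; [lra|]. have := pos_INR p; lra. Qed.

Lemma cluster (u : nat -> R) : (forall n, 0 <= u n <= 1) ->
  exists l, 0 <= l <= 1 /\ forall eps, 0 < eps -> forall N, exists p, (N <= p)%nat /\ Rabs (u p - l) < eps.
Proof. intros Hu. destruct (Bolzano_Weierstrass u _ (compact_P3 0 1) Hu) as [l Hl].
  have Hc : forall eps, 0 < eps -> forall N, exists p, (N <= p)%nat /\ Rabs (u p - l) < eps.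
  { intros eps He N. destruct (Hl (disc l (mkposreal eps He)) N) as [p [Hp Hd]].
    - exists (mkposreal eps He). intros x Hx; exact Hx.
    - exists p; split; auto. }
  exists l; split; auto. split.
  - destruct (Rle_lt_dec 0 l) as [|Hl0]; auto. destruct (Hc (- l) ltac:(lra) 0%nat) as [p [_ Hp]].
    have := Hu p; have := Rabs_def2 _ _ Hp; lra.
  - destruct (Rle_lt_dec l 1) as [|Hl0]; auto. destruct (Hc (l - 1) ltac:(lra) 0%nat) as [p [_ Hp]].
    have := Hu p; have := Rabs_def2 _ _ Hp; lra.
Qed.

Lemma hull_closed (s : simplex m) y :
  (forall eps, 0 < eps -> exists z, hull s z /\ close z y eps) -> hull s y.
Proof.
  revert y; induction s as [|v s IH]; intros y Hy.
  { destruct (Hy 1 ltac:(lra)) as [z [Hz _]]. exfalso; exact (hull_nil _ Hz). }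
  have Hseq : forall n : nat, exists aw : R * Pt, 0 <= fst aw <= 1 /\ (fst aw = 0 \/ hull s (snd aw)) /\
      close (lin (1 - fst aw) v (fst aw) (snd aw)) y (/ (INR n + 1)).
  { intros n. have Hpos : 0 < / (INR n + 1) by apply Rinv_0_lt_compat; have := pos_INR n; lra.
    destruct (Hy _ Hpos) as [z [Hz Hc]]. destruct (hull_cons_inv _ _ _ Hz) as [a [w [Ha [Hw Hzj]]]].
    exists (a, w); simpl. split; [auto|split; [auto|]]. intros j; rewrite /lin -Hzj; apply Hc. }
  pose aw n := proj1_sig (constructive_indefinite_description _ (Hseq n)).
  have Haw : forall n, 0 <= fst (aw n) <= 1 /\ (fst (aw n) = 0 \/ hull s (snd (aw n))) /\
      close (lin (1 - fst (aw n)) v (fst (aw n)) (snd (aw n))) y (/ (INR n + 1)).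
  { intros n; exact (proj2_sig (constructive_indefinite_description _ (Hseq n))). }
  destruct (cluster (fun n => fst (aw n)) (fun n => proj1 (Haw n))) as [l [Hl Hcl]].
  destruct (Rle_lt_dec l 0) as [Hl0|Hl0].
  -
    apply (hull_ext (v :: s) v); [|apply hull_vertex].
    intros j. symmetry; apply Rminus_diag_uniq. apply lt_eps_0. intros eps He.
    destruct (hull_bounded s) as [Bs [HBs0 HBs]].
    set c := Bs + Rabs (v j) + 1.
    have Hc : 0 < c by have := Rabs_pos (v j); rewrite /c; lra.
    destruct (inv_small (eps / 2) ltac:(lra)) as [N HN].
    destruct (Hcl (eps / (2 * c)) ltac:(apply Rdiv_lt_0_compat; lra) N) as [p [Hp Hap]].
    destruct (Haw p) as [Ha [Hw Hcl']].
    set a := fst (aw p) in Ha Hw Hcl' Hap. set w := snd (aw p) in Hw Hcl'.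
    have E1 := Hcl' j. have E2 := HN p Hp. rewrite /lin in E1.
    have Hap' : a < eps / (2 * c) by have := Rabs_def2 _ _ Hap; lra.
    have Hm : Rabs (a * (w j - v j)) <= eps / 2.
    { destruct Hw as [Ha0|Hw].
      - rewrite Ha0 Rmult_0_l Rabs_R0; lra.
      - rewrite Rabs_mult (Rabs_right a); [|lra].
        have Hwv : Rabs (w j - v j) <= c.
        { have := HBs w Hw j. have := Rabs_triang (w j) (- v j). rewrite Rabs_Ropp. rewrite /c; unfold Rminus; lra. }
        have Hc2 : eps / (2 * c) * c = eps / 2 by field; lra.
        have := Rabs_pos (w j - v j). nra. }
    have E : y j - v j = (y j - ((1 - a) * v j + a * w j)) + a * (w j - v j) by ring.
    rewrite E. eapply Rle_lt_trans; [apply Rabs_triang|]. rewrite Rabs_minus_sym. lra.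
  -
    set ws : Pt := fun j => v j + (y j - v j) / l.
    have Hws : hull s ws.
    { apply IH. intros eps He.
      destruct (fin_max (fun j => Rabs (y j - v j))) as [B0 HB0'].
      set B := Rmax B0 0. have HB0 : 0 <= B by apply Rmax_r.
      have HB : forall j, Rabs (y j - v j) <= B by intros j; eapply Rle_trans; [apply HB0'|apply Rmax_l].
      set d := Rmin (l / 2) (eps * l * l / (4 * (B + 1))).
      have Hd : 0 < d. { apply Rmin_glb_lt; [lra|]. apply Rdiv_lt_0_compat; [|lra]. apply Rmult_lt_0_compat; [nra|lra]. }
      destruct (inv_small (eps * l / 4) ltac:(nra)) as [N HN].
      destruct (Hcl d Hd N) as [p [Hp Hap]].
      destruct (Haw p) as [Ha [Hw Hcl']].
      set a := fst (aw p) in Ha Hw Hcl' Hap. set w := snd (aw p) in Hw Hcl'.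
      have Hd1 := Rmin_l (l / 2) (eps * l * l / (4 * (B + 1))).
      have Hd2 := Rmin_r (l / 2) (eps * l * l / (4 * (B + 1))). rewrite -/d in Hd1 Hd2.
      have [Hap1 Hap2] := Rabs_def2 _ _ Hap.
      have Hapos : l / 2 < a by lra.
      exists w. split; [destruct Hw; [lra|auto]|].
      intros j. have E1 := Hcl' j. have E2 := HN p Hp. rewrite /lin in E1.
      set E := (1 - a) * v j + a * w j - y j in E1.
      set D := y j - v j. have HD := HB j.
      have Hx : a * (w j - ws j) = E + D * (l - a) / l by rewrite /E /D /ws; field; lra.
      have HQ : Rabs (D * (l - a) / l) <= eps * l / 4.
      { have -> : D * (l - a) / l = D * (l - a) * / l by reflexivity.
        rewrite !Rabs_mult (Rabs_right (/ l)); [|apply Rle_ge, Rlt_le, Rinv_0_lt_compat; lra].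
        have Hla : Rabs (l - a) < d by rewrite Rabs_minus_sym.
        have H1 : Rabs D * Rabs (l - a) <= B * (eps * l * l / (4 * (B + 1))).
        { apply Rmult_le_compat; [apply Rabs_pos|apply Rabs_pos|auto|lra]. }
        have H2 : B * (eps * l * l / (4 * (B + 1))) <= eps * l * l / 4.
        { have -> : B * (eps * l * l / (4 * (B + 1))) = (eps * l * l / 4) * (B / (B + 1)) by field; lra.
          have HX : B / (B + 1) <= 1. { have -> : B / (B + 1) = 1 - / (B + 1) by field; lra. have : 0 < / (B + 1) by apply Rinv_0_lt_compat; lra. lra. }
          have Q1 : 0 < eps * l by apply Rmult_lt_0_compat.
          have Q2 : 0 < eps * l * l by apply Rmult_lt_0_compat.
          have Q3 : 0 <= eps * l * l / 4 by lra.
          have := Rmult_le_compat_l (eps * l * l / 4) _ _ Q3 HX. lra. }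
        have Hil : 0 < / l by apply Rinv_0_lt_compat.
        have -> : eps * l / 4 = (eps * l * l / 4) * / l by field; lra.
        apply Rmult_le_compat_r; lra. }
      have Hax : Rabs (a * (w j - ws j)) < eps * l / 2.
      { rewrite Hx. eapply Rle_lt_trans; [apply Rabs_triang|]. lra. }
      rewrite Rabs_mult (Rabs_right a) in Hax; [|lra].
      have := Rabs_pos (w j - ws j). nra. }
    apply (hull_ext (v :: s) (lin (1 - l) v l ws)); [|apply hull_cons_intro; auto].
    intros j; rewrite /lin /ws. field. lra.
Qed.

Definition pt0 : Pt := fun _ => 0.
Definition delta (k : nat) : nat -> R := fun i => if Nat.eqb i k then 1 else 0.

Lemma sum_first_delta k n : (k < n)%nat -> sum_first (delta k) n = 1.
Proof. induction n; intros Hk; [lia|]. simpl. destruct (Nat.eq_dec k n) as [->|Hne].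
  - rewrite (sum_first_ext (delta n) (fun _ => 0)); [rewrite sum_first_0 /delta Nat.eqb_refl; ring|].
    intros i Hi; rewrite /delta; have : Nat.eqb i n = false by apply Nat.eqb_neq; lia. by move=> ->.
  - rewrite IHn; [|lia]. rewrite /delta; have : Nat.eqb n k = false by apply Nat.eqb_neq; lia. move=> ->; ring. Qed.

Lemma comb_delta k (b : simplex m) j : (k < length b)%nat -> comb (delta k) b j = nth k b pt0 j.
Proof. revert k; induction b as [|v b IH]; intros k Hk; simpl in Hk; [lia|].
  destruct k as [|k].
  - simpl. rewrite (comb_ext (fun i => delta 0 (S i)) (fun _ => 0)); [rewrite comb_zero /delta /=; ring|].
    intros; reflexivity.
  - simpl. rewrite (comb_ext (fun i => delta (S k) (S i)) (delta k)); [|intros; reflexivity].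
    rewrite IH; [|lia]. rewrite /delta /=; ring. Qed.

Lemma hull_nth_delta k (b : simplex m) : (k < length b)%nat -> 
  (forall i, (i < length b)%nat -> 0 <= delta k i) /\ sum_first (delta k) (length b) = 1 /\
  (forall j, nth k b pt0 j = comb (delta k) b j).
Proof. intros Hk; split; [intros i _; rewrite /delta; destruct (Nat.eqb i k); lra|split].
  - by apply sum_first_delta. - intros j; by rewrite comb_delta. Qed.

Lemma aff_indep_nodup (b : simplex m) : aff_indep b -> NoDup b.
Proof.
  intros H. apply (NoDup_nth b pt0). intros i k Hi Hk E.
  destruct (Nat.eq_dec i k) as [|Hne]; auto. exfalso.
  have H1 := H (fun n => delta i n - delta k n).
  have Hz : sum_first (fun n => delta i n - delta k n) (length b) = 0.
  { rewrite (sum_first_ext _ (fun n => 1 * delta i n + (-1) * delta k n)); [|intros; ring].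
    rewrite sum_first_lin !sum_first_delta //; ring. }
  have Hc : forall j, comb (fun n => delta i n - delta k n) b j = 0.
  { intros j. rewrite (comb_ext _ (fun n => 1 * delta i n + (-1) * delta k n)); [|intros; ring].
    rewrite comb_lin !comb_delta // E; ring. }
  have := H1 Hz Hc i Hi. rewrite /delta Nat.eqb_refl. have -> : Nat.eqb i k = false by apply Nat.eqb_neq. lra.
Qed.

Lemma hull_convex (b : simplex m) p q a : 0 <= a <= 1 -> hull b p -> hull b q -> hull b (lin (1 - a) p a q).
Proof. intros Ha [lp [P1 [P2 P3]]] [lq [Q1 [Q2 Q3]]].
  exists (fun i => (1 - a) * lp i + a * lq i). split; [|split].
  - intros i Hi; have := P1 i Hi; have := Q1 i Hi; nra.
  - rewrite sum_first_lin P2 Q2; ring.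
  - intros j; rewrite comb_lin /lin P3 Q3; ring. Qed.

Lemma hull_of_in (b : simplex m) u : In u b -> hull b u.
Proof. induction b as [|v b IH]; intros Hu; [destruct Hu|].
  destruct Hu as [->|Hu]; [apply hull_vertex|].
  apply (hull_ext _ (lin (1 - 1) v 1 u)); [intros j; rewrite /lin; ring|].
  apply hull_cons_intro; [lra|auto]. Qed.

Lemma hull_incl (a b : simplex m) x : incl a b -> hull a x -> hull b x.
Proof. revert x; induction a as [|u a IH]; intros x Hab Hx; [exfalso; exact (hull_nil _ Hx)|].
  destruct (hull_cons_inv _ _ _ Hx) as [t [w [Ht [Hw Hxj]]]].
  have Hu : hull b u by apply hull_of_in, Hab; left.
  apply (hull_ext _ _ _ (fun j => Logic.eq_sym (Hxj j))).
  destruct Hw as [->|Hw].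
  - apply (hull_ext _ u); [intros j; ring|auto].
  - apply hull_convex; auto. apply IH; auto. intros z Hz; apply Hab; right; auto. Qed.

Lemma relint_seg (d : simplex m) p q t : hull d p -> relint d q -> 0 < t <= 1 -> relint d (lin (1 - t) p t q).
Proof. intros [lp [P1 [P2 P3]]] [lq [Q1 [Q2 Q3]]] Ht.
  have Hs : sum_first (fun i => (1 - t) * lp i + t * lq i) (length d) = 1 by rewrite sum_first_lin P2 Q2; ring.
  exists (fun i => (1 - t) * lp i + t * lq i). split; [|split]; auto.
  - intros i Hi. have := P1 i Hi; have := Q1 i Hi; intros [? ?] ?. split; [nra|].
    have Hnn : forall k, (k < length d)%nat -> 0 <= (1 - t) * lp k + t * lq k.
    { intros k Hk; have := P1 k Hk; have := Q1 k Hk; intros [? ?] ?; nra. }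
    have := sum_first_le _ _ i Hnn Hi. lra.
  - intros j; rewrite comb_lin /lin P3 Q3; ring. Qed.

Lemma support (s : simplex m) x : hull s x -> exists t, incl t s /\ (NoDup s -> NoDup t) /\ relint t x.
Proof. revert x; induction s as [|v s IH]; intros x Hx; [exfalso; exact (hull_nil _ Hx)|].
  destruct (hull_cons_inv _ _ _ Hx) as [a [w [Ha [Hw Hxj]]]].
  destruct (Req_dec a 0) as [Ha0|Ha0].
  { exists [v]. split; [intros z [<-|[]]; left; auto|split; [intros _; constructor; [intros []|constructor]|]].
    apply (relint_ext _ v); [intros j; rewrite Hxj Ha0; ring|apply relint_single]. }
  destruct Hw as [|Hw]; [lra|]. destruct (IH w Hw) as [t [Ht1 [Ht2 Ht3]]].
  destruct (Req_dec a 1) as [Ha1|Ha1].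
  - exists t. split; [intros z Hz; right; auto|split].
    + intros Hnd; apply Ht2; inversion Hnd; auto.
    + apply (relint_ext _ w); [intros j; rewrite Hxj Ha1; ring|auto].
  - exists (v :: t). split; [intros z [<-|Hz]; [left|right]; auto|split].
    + intros Hnd; inversion Hnd; subst. constructor; auto.
    + apply (relint_ext _ (lin (1 - a) v a w)); [intros j; rewrite Hxj; reflexivity|].
      apply relint_cons_intro; auto; lra.
Qed.

Lemma perm_coords (l l' : simplex m) : Permutation l l' -> forall lam, exists lam',
  (forall i, (i < length l')%nat -> exists k, (k < length l)%nat /\ lam' i = lam k) /\
  sum_first lam' (length l') = sum_first lam (length l) /\
  (forall j, comb lam' l' j = comb lam l j).
Proof.
  induction 1 as [|x l l' Hp IH|x y l|l l' l'' H1 IH1 H2 IH2]; intros lam.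
  - exists lam; split; [intros i Hi; exists i; auto|split; auto].
  - destruct (IH (fun i => lam (S i))) as [mu [M1 [M2 M3]]].
    exists (fun i => if i is S k then mu k else lam 0%nat). split; [|split].
    + intros [|i] Hi; [exists 0%nat; simpl; split; [lia|auto]|].
      destruct (M1 i ltac:(simpl in Hi; lia)) as [k [Hk E]]. exists (S k); simpl; split; [lia|auto].
    + cbn [length]. rewrite !sum_first_S M2; reflexivity.
    + intros j; simpl; rewrite M3; reflexivity.
  - exists (fun i => match i with 0 => lam 1%nat | 1 => lam 0%nat | S (S k) => lam (S (S k)) end)%nat.
    split; [|split].
    + intros [|[|i]] Hi; [exists 1%nat|exists 0%nat|exists (S (S i))]; simpl in *; split; auto; lia.
    + cbn [length]. rewrite !sum_first_S. simpl. ring.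
    + intros j; simpl; ring.
  - destruct (IH1 lam) as [mu [M1 [M2 M3]]]. destruct (IH2 mu) as [nu [N1 [N2 N3]]].
    exists nu. split; [|split].
    + intros i Hi. destruct (N1 i Hi) as [k [Hk E]]. destruct (M1 k Hk) as [k' [Hk' E']].
      exists k'; split; auto; congruence.
    + congruence.
    + intros j; rewrite N3 M3; reflexivity.
Qed.

Lemma relint_perm (l l' : simplex m) x : Permutation l l' -> relint l x -> relint l' x.
Proof. intros Hp [lam [H1 [H2 H3]]]. destruct (perm_coords l l' Hp lam) as [lam' [L1 [L2 L3]]].
  exists lam'. split; [|split].
  - intros i Hi; destruct (L1 i Hi) as [k [Hk ->]]; auto.
  - congruence.
  - intros j; rewrite L3; auto. Qed.

Lemma relint_nil x : ~ relint (m:=m) [] x.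
Proof. intros H; exact (hull_nil _ (relint_hull _ _ H)). Qed.

Variable K : list (simplex m).
Hypothesis HK : simplicial_complex K.

Lemma cell_of x : polyhedron K x -> exists c, is_cell K c /\ relint c x.
Proof.
  intros [s [Hs Hx]]. destruct HK as [Hai [Hface _]].
  destruct (support s x Hx) as [t [Ht1 [Ht2 Ht3]]].
  destruct (Hface s t Hs Ht1) as [t' [Ht' [I1 I2]]].
  have Hnd := aff_indep_nodup _ (Hai s Hs). have Hnd' := aff_indep_nodup _ (Hai t' Ht').
  have Hp : Permutation t t' by apply NoDup_Permutation; auto; intros z; split; auto.
  exists t'. split; [split; auto|].
  - intros ->. apply (relint_nil x). apply (relint_perm t); auto.
  - apply (relint_perm t); auto.
Qed.

Lemma hull_incl_coords (a b : simplex m) x : incl a b -> hull a x ->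
  exists lam, (forall i, (i < length b)%nat -> 0 <= lam i) /\ sum_first lam (length b) = 1 /\
    (forall j, x j = comb lam b j) /\
    (forall i, (i < length b)%nat -> ~ In (nth i b pt0) a -> lam i = 0).
Proof.
  revert x; induction a as [|u a IH]; intros x Hab Hx; [exfalso; exact (hull_nil _ Hx)|].
  destruct (hull_cons_inv _ _ _ Hx) as [t [w [Ht [Hw Hxj]]]].
  destruct (In_nth b u pt0 (Hab u (or_introl Logic.eq_refl))) as [k [Hk Hku]].
  destruct (hull_nth_delta k b Hk) as [D1 [D2 D3]].
  have Hd0 : forall i, (i < length b)%nat -> ~ In (nth i b pt0) (u :: a) -> delta k i = 0.
  { intros i Hi Hn. rewrite /delta. destruct (Nat.eqb_spec i k) as [->|]; auto.
    exfalso; apply Hn; left; auto. }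
  destruct Hw as [Ht0|Hw].
  - exists (delta k). split; [auto|split; [auto|split; [|auto]]].
    intros j; rewrite Hxj Ht0 -D3 Hku; ring.
  - destruct (IH w (fun z Hz => Hab z (or_intror Hz)) Hw) as [mu [M1 [M2 [M3 M4]]]].
    exists (fun i => (1 - t) * delta k i + t * mu i). split; [|split; [|split]].
    + intros i Hi; have := D1 i Hi; have := M1 i Hi; nra.
    + rewrite sum_first_lin D2 M2; ring.
    + intros j; rewrite comb_lin -D3 -M3 Hku Hxj; ring.
    + intros i Hi Hn. rewrite (Hd0 i Hi Hn) (M4 i Hi); [ring|]. intros Hin; apply Hn; right; auto.
Qed.

Lemma coords_unique (b : simplex m) lam mu : aff_indep b ->
  sum_first lam (length b) = 1 -> sum_first mu (length b) = 1 ->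
  (forall j, comb lam b j = comb mu b j) -> forall i, (i < length b)%nat -> lam i = mu i.
Proof. intros H H1 H2 H3 i Hi.
  have := H (fun n => 1 * lam n + (-1) * mu n).
  rewrite sum_first_lin H1 H2. intros H4. have := H4 ltac:(ring).
  intros H5; have := H5 ltac:(intros j; rewrite comb_lin H3; ring) i Hi. lra. Qed.

Lemma face_lemma (c d : simplex m) x : In c K -> In d K -> relint c x -> hull d x ->
  forall y, hull c y -> hull d y.
Proof.
  intros Hc Hd Hx Hdx y Hy. destruct HK as [Hai [_ Hint]].
  destruct (Hint c d Hc Hd) as [tau [Ht1 [Ht2 Ht3]]].
  have Htx : hull tau x by apply Ht3; split; auto; apply relint_hull.
  have Hct : incl c tau.
  { intros u Hu. destruct (In_nth c u pt0 Hu) as [k [Hk <-]].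
    destruct (classic (In (nth k c pt0) tau)) as [|Hn]; auto. exfalso.
    destruct (hull_incl_coords tau c x Ht1 Htx) as [lam [L1 [L2 [L3 L4]]]].
    destruct Hx as [rho [R1 [R2 R3]]].
    have E := coords_unique c lam rho (Hai c Hc) L2 R2 ltac:(intros j; rewrite -L3 -R3; reflexivity) k Hk.
    have := L4 k Hk Hn. have := R1 k Hk. lra. }
  have : hull tau y by apply (hull_incl c); auto.
  intros Hty. apply Ht3 in Hty. tauto.
Qed.

Lemma hull_open_compl (s : simplex m) (p : Pt) : ~ hull s p -> exists e, 0 < e /\ forall q, close q p e -> ~ hull s q.
Proof. intros Hn. apply NNPP; intros Hc. apply Hn, hull_closed. intros eps He.
  apply NNPP; intros Hc2. apply Hc. exists eps; split; auto. intros q Hq Hsq. apply Hc2. exists q; split; auto. Qed.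

Lemma local_lemma (p : Pt) : polyhedron K p -> exists e, 0 < e /\ forall q, polyhedron K q -> close q p e ->
  exists c, is_cell K c /\ relint c q /\ hull c p.
Proof.
  intros Hp.
  have H : forall l : list (simplex m), exists e, 0 < e /\ forall s, In s l -> ~ hull s p ->
     forall q, close q p e -> ~ hull s q.
  { induction l as [|s l [e [He IH]]]; [exists 1; split; [lra|intros s []]|].
    destruct (classic (hull s p)) as [Hs|Hs].
    - exists e; split; auto. intros s' [<-|Hs'] Hn; [contradiction|auto].
    - destruct (hull_open_compl s p Hs) as [e' [He' H']].
      exists (Rmin e e'). split; [apply Rmin_glb_lt; auto|].
      intros s' [<-|Hs'] Hn q Hq.
      + apply H'. eapply close_mono; [apply Hq|apply Rmin_r].
      + apply (IH s'); auto. eapply close_mono; [apply Hq|apply Rmin_l]. }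
  destruct (H K) as [e [He He']]. exists e; split; auto.
  intros q Hq Hqp. destruct (cell_of q Hq) as [c [Hc Hcq]].
  exists c; split; [auto|split; [auto|]].
  apply NNPP; intros Hn. apply (He' c (proj1 Hc) Hn q Hqp). by apply relint_hull.
Qed.

Definition cont_on (F : R -> Pt) (lo hi : R) : Prop :=
  forall t, lo <= t <= hi -> forall eps, 0 < eps -> exists d, 0 < d /\
    forall s, lo <= s <= hi -> Rabs (s - t) < d -> close (F s) (F t) eps.

Lemma cont_on_affine f c d lo hi : cont_on f 0 1 -> 0 < c -> (forall t, lo <= t <= hi -> 0 <= c * t + d <= 1) ->
  cont_on (fun t => f (c * t + d)) lo hi.
Proof. intros Hf Hc Hm t Ht eps He. destruct (Hf _ (Hm t Ht) eps He) as [dl [Hd Hd']].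
  exists (dl / c). split; [apply Rdiv_lt_0_compat; auto|]. intros s Hs Hst.
  apply Hd'; [auto|]. have -> : c * s + d - (c * t + d) = c * (s - t) by ring.
  rewrite Rabs_mult (Rabs_right c); [|lra]. apply (Rmult_lt_reg_r (/ c)); [apply Rinv_0_lt_compat; auto|].
  have -> : c * Rabs (s - t) * / c = Rabs (s - t) by field; lra. exact Hst. Qed.

Definition glue (t0 : R) (F G : R -> Pt) : R -> Pt := fun t => if Rle_dec t t0 then F t else G t.

Lemma glue_path t0 F G : 0 < t0 < 1 -> cont_on F 0 t0 -> cont_on G t0 1 -> F t0 = G t0 ->
  (forall t, 0 <= t <= t0 -> polyhedron K (F t)) -> (forall t, t0 <= t <= 1 -> polyhedron K (G t)) ->
  is_path K (glue t0 F G).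
Proof. intros Ht0 HF HG E PF PG. split.
  - intros t Ht. rewrite /glue. destruct (Rle_dec t t0); [apply PF|apply PG]; lra.
  - intros t Ht eps He. rewrite /glue.
    destruct (Rtotal_order t t0) as [Hlt|[Heq|Hgt]].
    + destruct (HF t ltac:(lra) eps He) as [d [Hd Hd']].
      exists (Rmin d (t0 - t)). split; [apply Rmin_glb_lt; lra|]. intros s Hs Hst.
      have := Rmin_l d (t0 - t); have := Rmin_r d (t0 - t); intros; have := Rabs_def2 _ _ Hst; intros [? ?].
      destruct (Rle_dec s t0); [|lra]. destruct (Rle_dec t t0); [|lra]. apply Hd'; lra.
    + subst t. destruct (HF t0 ltac:(lra) eps He) as [d1 [Hd1 Hd1']]. destruct (HG t0 ltac:(lra) eps He) as [d2 [Hd2 Hd2']].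
      exists (Rmin d1 d2). split; [apply Rmin_glb_lt; lra|]. intros s Hs Hst.
      have := Rmin_l d1 d2; have := Rmin_r d1 d2; intros; have := Rabs_def2 _ _ Hst; intros [? ?].
      destruct (Rle_dec t0 t0); [|lra]. destruct (Rle_dec s t0); [apply Hd1'; lra|]. rewrite E; apply Hd2'; lra.
    + destruct (HG t ltac:(lra) eps He) as [d [Hd Hd']].
      exists (Rmin d (t - t0)). split; [apply Rmin_glb_lt; lra|]. intros s Hs Hst.
      have := Rmin_l d (t - t0); have := Rmin_r d (t - t0); intros; have := Rabs_def2 _ _ Hst; intros [? ?].
      destruct (Rle_dec s t0); [lra|]. destruct (Rle_dec t t0); [lra|]. apply Hd'; lra.
Qed.

Lemma path_cont f : is_path K f -> cont_on f 0 1.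
Proof. intros [_ H] t Ht eps He. destruct (H t Ht eps He) as [d [Hd Hd']]. exists d; split; auto. Qed.

Definition concat (f g : R -> Pt) : R -> Pt := glue (1/2) (fun t => f (2 * t + 0)) (fun t => g (2 * t + -1)).

Lemma concat_path f g : is_path K f -> is_path K g -> f 1 = g 0 -> is_path K (concat f g).
Proof. intros Hf Hg E. apply glue_path; [lra| | | | |].
  - apply cont_on_affine; [apply path_cont; auto|lra|intros; lra].
  - apply cont_on_affine; [apply path_cont; auto|lra|intros; lra].
  - have -> : 2 * (1/2) + 0 = 1 by field. have -> : 2 * (1/2) + -1 = 0 by field. auto.
  - intros t Ht; apply (proj1 Hf); lra.
  - intros t Ht; apply (proj1 Hg); lra.
Qed.

Lemma concat_l f g t : t <= 1/2 -> concat f g t = f (2 * t).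
Proof. intros H; rewrite /concat /glue; destruct (Rle_dec t (1/2)); [|lra]. by rewrite Rplus_0_r. Qed.
Lemma concat_r f g t : 1/2 < t -> concat f g t = g (2 * t - 1).
Proof. intros H; rewrite /concat /glue; destruct (Rle_dec t (1/2)); [lra|]. have -> : 2 * t + -1 = 2 * t - 1 by ring. reflexivity. Qed.

Lemma incr_le (s : nat -> R) k : (forall i, (i < k)%nat -> s i < s (S i)) -> forall i j, (i <= j <= k)%nat -> s i <= s j.
Proof. intros H i j. induction j as [|j IH]; intros Hij; [(have -> : i = 0%nat by lia); lra|].
  destruct (Nat.eq_dec i (S j)) as [Heq|Hne]; [rewrite Heq; lra|]. have := H j ltac:(lia). have := IH ltac:(lia). lra. Qed.

Lemma concat_spath f g : simplicial_path K f -> simplicial_path K g -> f 1 = g 0 ->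
  simplicial_path K (concat f g).
Proof.
  intros [Pf [k1 [s1 [c1 [S10 [S11 [S1m S1c]]]]]]] [Pg [k2 [s2 [c2 [S20 [S21 [S2m S2c]]]]]]] E.
  split; [apply concat_path; auto|].
  have Hk1 : (0 < k1)%nat by destruct k1; [rewrite S10 in S11; lra|lia].
  have Hk2 : (0 < k2)%nat by destruct k2; [rewrite S20 in S21; lra|lia].
  have Hs1 := incr_le s1 k1 S1m. have Hs2 := incr_le s2 k2 S2m.
  exists (k1 + k2)%nat, (fun i => if Nat.leb i k1 then s1 i / 2 else (1 + s2 (i - k1)%nat) / 2),
    (fun i => if Nat.ltb i k1 then c1 i else c2 (i - k1)%nat).
  split; [|split; [|split]].
  - simpl. rewrite S10; lra.
  - have -> : Nat.leb (k1 + k2) k1 = false by apply Nat.leb_gt; lia.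
    have -> : (k1 + k2 - k1 = k2)%nat by lia. rewrite S21; lra.
  - intros i Hi. destruct (Nat.leb_spec (S i) k1).
    + have -> : Nat.leb i k1 = true by apply Nat.leb_le; lia. have := S1m i ltac:(lia). lra.
    + destruct (Nat.leb_spec i k1).
      * have -> : i = k1 by lia. have -> : (S k1 - k1 = 1)%nat by lia. rewrite S11.
        have := S2m 0%nat ltac:(lia). rewrite S20. lra.
      * have -> : (S i - k1 = S (i - k1))%nat by lia. have := S2m (i - k1)%nat ltac:(lia). lra.
  - intros i Hi. destruct (Nat.ltb_spec i k1).
    + have -> : Nat.leb i k1 = true by apply Nat.leb_le; lia.
      have -> : Nat.leb (S i) k1 = true by apply Nat.leb_le; lia.
      destruct (S1c i ltac:(lia)) as [Hc Hr]. split; auto. intros t Ht.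
      have := Hs1 (S i) k1 ltac:(lia). rewrite S11. intros.
      rewrite concat_l; [|lra]. apply Hr; lra.
    + have -> : Nat.leb (S i) k1 = false by apply Nat.leb_gt; lia.
      have -> : (S i - k1 = S (i - k1))%nat by lia.
      destruct (S2c (i - k1)%nat ltac:(lia)) as [Hc Hr]. split; auto. intros t Ht.
      have H0 : 0 <= s2 (i - k1)%nat by rewrite -S20; apply Hs2; lia.
      have Hlb : 1/2 <= (if Nat.leb i k1 then s1 i / 2 else (1 + s2 (i - k1)%nat) / 2).
      { destruct (Nat.leb_spec i k1); [(have -> : i = k1 by lia); rewrite S11; lra|lra]. }
      have Hlb' : (if Nat.leb i k1 then s1 i / 2 else (1 + s2 (i - k1)%nat) / 2) = (1 + s2 (i - k1)%nat) / 2.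
      { destruct (Nat.leb_spec i k1); [|reflexivity]. have E' : i = k1 by lia. subst i.
        rewrite Nat.sub_diag S20 S11; field. }
      rewrite Hlb' in Ht. rewrite concat_r; [|lra]. apply Hr; lra.
Qed.

Definition seg (p q : Pt) : R -> Pt := fun t => lin (1 - t) p t q.

Lemma seg_0 p q : seg p q 0 = p.
Proof. apply functional_extensionality => j. rewrite /seg /lin; ring. Qed.
Lemma seg_1 p q : seg p q 1 = q.
Proof. apply functional_extensionality => j. rewrite /seg /lin; ring. Qed.
Lemma seg_rev p q t : seg q p t = seg p q (1 - t).
Proof. apply functional_extensionality => j. rewrite /seg /lin; ring. Qed.

Lemma seg_close p q : exists B, 0 < B /\ forall s t, close (seg p q s) (seg p q t) (B * Rabs (s - t) + 0) \/ s = t.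
Proof. destruct (fin_max (fun j => Rabs (q j - p j))) as [B0 HB0]. exists (Rmax B0 0 + 1).
  split; [have := Rmax_r B0 0; lra|]. intros s t. destruct (Req_dec s t) as [|Hne]; [right; auto|left].
  intros j. rewrite /seg /lin. have -> : (1 - s) * p j + s * q j - ((1 - t) * p j + t * q j) = (s - t) * (q j - p j) by ring.
  rewrite Rabs_mult. have := HB0 j; have := Rmax_l B0 0; have := Rmax_r B0 0.
  have := Rabs_pos_lt (s - t) ltac:(lra). have := Rabs_pos (q j - p j). nra. Qed.

Lemma seg_cont p q lo hi : cont_on (seg p q) lo hi.
Proof. destruct (seg_close p q) as [B [HB HB']]. intros t Ht eps He.
  exists (eps / B). split; [apply Rdiv_lt_0_compat; auto|]. intros s Hs Hst.
  destruct (HB' s t) as [H| ->]; [|apply close_refl; auto].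
  eapply close_mono; [apply H|]. rewrite Rplus_0_r.
  apply (Rmult_le_reg_r (/ B)); [apply Rinv_0_lt_compat; auto|].
  have -> : B * Rabs (s - t) * / B = Rabs (s - t) by field; lra. rewrite /Rdiv in Hst. lra. Qed.

Lemma seg_in_hull d p q t : hull d p -> hull d q -> 0 <= t <= 1 -> hull d (seg p q t).
Proof. intros Hp Hq Ht. by apply hull_convex. Qed.

Lemma seg_spath d p q : In d K -> d <> [] -> hull d p -> relint d q ->
  simplicial_path K (seg p q) /\ forall t, 0 < t <= 1 -> relint d (seg p q t).
Proof. intros Hd Hd0 Hp Hq.
  have Hr : forall t, 0 < t <= 1 -> relint d (seg p q t) by intros t Ht; apply relint_seg.
  split; auto. split.
  - split; [intros t Ht; exists d; split; auto; apply seg_in_hull; auto; apply relint_hull; auto|].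
    intros t Ht eps He. have := seg_cont p q 0 1 t Ht eps He. intros [dl [? ?]]; exists dl; split; auto.
  - exists 1%nat, (fun i => INR i), (fun _ => d). split; [reflexivity|split; [reflexivity|split]].
    + intros i Hi; have -> : i = 0%nat by lia. simpl; lra.
    + intros i Hi; have -> : i = 0%nat by lia. split; [split; auto|]. intros t Ht; apply Hr; simpl in Ht; lra.
Qed.

Lemma seg_spath_rev d p q : In d K -> d <> [] -> hull d p -> relint d q ->
  simplicial_path K (seg q p) /\ forall t, 0 <= t < 1 -> relint d (seg q p t).
Proof. intros Hd Hd0 Hp Hq.
  have Hr : forall t, 0 <= t < 1 -> relint d (seg q p t) by intros t Ht; rewrite seg_rev; apply relint_seg; auto; lra.
  split; auto. split.
  - split; [intros t Ht; exists d; split; auto; apply seg_in_hull; auto; apply relint_hull; auto|].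
    intros t Ht eps He. have := seg_cont q p 0 1 t Ht eps He. intros [dl [? ?]]; exists dl; split; auto.
  - exists 1%nat, (fun i => INR i), (fun _ => d). split; [reflexivity|split; [reflexivity|split]].
    + intros i Hi; have -> : i = 0%nat by lia. simpl; lra.
    + intros i Hi; have -> : i = 0%nat by lia. split; [split; auto|]. intros t Ht; apply Hr; simpl in Ht; lra.
Qed.

Lemma face_incl (c d : simplex m) x : In c K -> In d K -> relint c x -> hull d x -> incl c d.
Proof.
  intros Hc Hd Hx Hdx. destruct HK as [Hai [_ Hint]].
  destruct (Hint c d Hc Hd) as [tau [Ht1 [Ht2 Ht3]]].
  have Htx : hull tau x by apply Ht3; split; auto; apply relint_hull.
  intros u Hu. apply Ht2. destruct (In_nth c u pt0 Hu) as [k [Hk <-]].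
  destruct (classic (In (nth k c pt0) tau)) as [|Hn]; auto. exfalso.
  destruct (hull_incl_coords tau c x Ht1 Htx) as [lam [L1 [L2 [L3 L4]]]].
  destruct Hx as [rho [R1 [R2 R3]]].
  have E := coords_unique c lam rho (Hai c Hc) L2 R2 ltac:(intros j; rewrite -L3 -R3; reflexivity) k Hk.
  have := L4 k Hk Hn. have := R1 k Hk. lra.
Qed.

Lemma cell_unique (c d : simplex m) x y : In c K -> In d K -> relint c x -> relint d x -> relint c y -> relint d y.
Proof. intros Hc Hd Hcx Hdx Hcy. destruct HK as [Hai _].
  have I1 := face_incl c d x Hc Hd Hcx (relint_hull _ _ Hdx).
  have I2 := face_incl d c x Hd Hc Hdx (relint_hull _ _ Hcx).
  apply (relint_perm c); auto. apply NoDup_Permutation; try apply aff_indep_nodup; auto.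
  intros z; split; auto. Qed.

Lemma relint_poly (d : simplex m) w : In d K -> relint d w -> polyhedron K w.
Proof. intros Hd Hw; exists d; split; auto; by apply relint_hull. Qed.

Lemma hull_poly (d : simplex m) w : In d K -> hull d w -> polyhedron K w.
Proof. intros Hd Hw; exists d; split; auto. Qed.

Lemma seg_near p q e : 0 < e -> exists t0, 0 < t0 <= 1 /\ forall t, 0 <= t <= t0 -> close (seg p q t) p e.
Proof. intros He. destruct (seg_close p q) as [B [HB HB']].
  exists (Rmin 1 (e / (2 * B))). split; [split; [apply Rmin_glb_lt; [lra|apply Rdiv_lt_0_compat; lra]|apply Rmin_l]|].
  intros t Ht. destruct (HB' t 0) as [H| ->]; [|rewrite seg_0; apply close_refl; auto].
  rewrite seg_0 in H. eapply close_mono; [apply H|]. rewrite Rplus_0_r Rminus_0_r Rabs_right; [|lra].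
  have := Rmin_r 1 (e / (2 * B)). intros H1.
  have : B * t <= B * (e / (2 * B)) by apply Rmult_le_compat_l; lra.
  have -> : B * (e / (2 * B)) = e / 2 by field; lra. lra. Qed.

Lemma cont_on_sub f a b lo hi : cont_on f a b -> a <= lo -> hi <= b -> cont_on f lo hi.
Proof. intros H Ha Hb t Ht eps He. destruct (H t ltac:(lra) eps He) as [d [Hd Hd']].
  exists d; split; auto. intros s Hs; apply Hd'; lra. Qed.

Lemma scale_in t0 t : 0 < t0 -> 0 <= t <= t0 -> 0 <= / t0 * t + 0 <= 1 /\ (0 < t -> 0 < / t0 * t + 0).
Proof. intros H1 H2. have Hi : 0 < / t0 by apply Rinv_0_lt_compat. have E : / t0 * t0 = 1 by apply Rinv_l; lra.
  split; [split; nra|intros; nra]. Qed.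

Variable AP : finType.
Variable V : AP -> Pt -> Prop.
Hypothesis HV : coherent K V.

Notation sat := (sat K V).

Lemma cell_hom (phi : form AP) : forall c x y, is_cell K c -> relint c x -> relint c y -> sat x phi -> sat y phi.
Proof.
  induction phi as [|p|f IHf|f IHf g IHg|f IHf|f IHf g IHg]; intros c x y Hc Hx Hy Hsat; simpl in *.
  - auto.
  - destruct (HV p x Hsat) as [s [Hs [Hsx Hs']]]. apply Hs'. apply (cell_unique c s x); auto.
    apply Hc. apply Hs.
  - intros H; apply Hsat, (IHf c y x); auto.
  - destruct Hsat; split; [apply (IHf c x y)|apply (IHg c x y)]; auto.
  -
    destruct Hsat as [Hpx [ex [Hex Hex']]].
    split; [apply (relint_poly c); auto; apply Hc|].
    apply NNPP; intros Hn.
    destruct (local_lemma y (relint_poly c y (proj1 Hc) Hy)) as [e [He HL]].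
    have [z [Hz1 [Hz2 Hz3]]] : exists z, polyhedron K z /\ close z y e /\ ~ sat z f.
    { apply NNPP; intros Hn2. apply Hn. exists e; split; auto. intros z Hz Hzc.
      apply NNPP; intros Hn3. apply Hn2; exists z; auto. }
    destruct (HL z Hz1 Hz2) as [d [Hd [Hdz Hdy]]].
    have Hnd : forall w, relint d w -> ~ sat w f.
    { intros w Hw Hsw. apply Hz3. apply (IHf d w z); auto. }
    have Hdx : hull d x by apply (face_lemma c d y (proj1 Hc) (proj1 Hd) Hy Hdy); apply relint_hull.
    destruct (seg_near x z ex Hex) as [t0 [Ht0 Ht0']].
    apply (Hnd (seg x z t0)); [apply relint_seg; auto|].
    apply Hex'; [|apply Ht0'; lra].
    apply (relint_poly d); [apply Hd|]. apply relint_seg; auto.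
  -
    destruct Hsat as [pi [Hpi [Hpi0 [Hpif Hpig]]]].
    destruct (local_lemma x (relint_poly c x (proj1 Hc) Hx)) as [e [He HL]].
    destruct (proj2 Hpi 0 ltac:(lra) e He) as [dl [Hdl Hdl']].
    set t0 := Rmin (dl / 2) (1 / 2).
    have Ht0 : 0 < t0 < 1 by split; [apply Rmin_glb_lt; lra|have := Rmin_r (dl/2) (1/2); rewrite -/t0; lra].
    have Ht0d : t0 < dl by have := Rmin_l (dl/2) (1/2); rewrite -/t0; lra.
    set q := pi t0.
    have Hq : polyhedron K q by apply (proj1 Hpi); lra.
    have Hqx : close q x e. { rewrite -Hpi0. apply Hdl'; [lra|]. rewrite Rminus_0_r Rabs_right; lra. }
    destruct (HL q Hq Hqx) as [d [Hd [Hdq Hdx]]].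
    have Hdy : hull d y by apply (face_lemma c d x (proj1 Hc) (proj1 Hd) Hx Hdx); apply relint_hull.
    have Hqf : sat q f by apply Hpif; lra.
    exists (glue t0 (fun t => seg y q (/ t0 * t + 0)) pi). split; [|split; [|split]].
    + apply glue_path; [auto| | | | |].
      * apply cont_on_affine; [apply seg_cont| |].
        -- apply Rinv_0_lt_compat; lra.
        -- intros t Ht. apply (scale_in t0 t); lra.
      * apply (cont_on_sub pi 0 1); [apply path_cont; auto|lra|lra].
      * rewrite Rinv_l; [|lra]. rewrite Rplus_0_r seg_1. reflexivity.
      * intros t Ht. apply (hull_poly d); [apply Hd|]. apply seg_in_hull; auto; [apply relint_hull; auto|].
        have := scale_in t0 t ltac:(lra) Ht. intros [[? ?] _]. rewrite Rplus_0_r in H H0. lra.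
      * intros t Ht; apply (proj1 Hpi); lra.
    + rewrite /glue. destruct (Rle_dec 0 t0); [|lra]. by rewrite Rmult_0_r Rplus_0_r seg_0.
    + intros t Ht. rewrite /glue. destruct (Rle_dec t t0) as [Hle|Hgt]; [|apply Hpif; lra].
      apply (IHf d q); auto.
      apply relint_seg; [exact Hdy|exact Hdq|].
      have := scale_in t0 t ltac:(lra) ltac:(lra). intros [[? ?] H3]. have := H3 ltac:(lra). lra.
    + rewrite /glue. destruct (Rle_dec 1 t0); [lra|]. auto.
Qed.

Definition Reach (x : Pt) (f : form AP) (p : Pt) : Prop :=
  exists sigma, simplicial_path K sigma /\ sigma 0 = x /\ sigma 1 = p /\ forall t, 0 < t < 1 -> sat (sigma t) f.

Lemma reach_seg x f d q : is_cell K d -> hull d x -> relint d q -> sat q f -> Reach x f q.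
Proof. intros Hd Hdx Hdq Hq. destruct (seg_spath d x q (proj1 Hd) (proj2 Hd) Hdx Hdq) as [Hs Hr].
  exists (seg x q). split; [auto|split; [apply seg_0|split; [apply seg_1|]]].
  intros t Ht. apply (cell_hom f d q); auto. apply Hr; lra. Qed.

Lemma concat_0 f g : concat f g 0 = f 0.
Proof. rewrite concat_l; [|lra]. by rewrite Rmult_0_r. Qed.
Lemma concat_1 f g : concat f g 1 = g 1.
Proof. rewrite concat_r; [|lra]. have -> : 2 * 1 - 1 = 1 by ring. reflexivity. Qed.
Lemma concat_half f g : concat f g (1/2) = f 1.
Proof. rewrite concat_l; [|lra]. have -> : 2 * (1/2) = 1 by field. reflexivity. Qed.

Lemma step_fwd x f p d q : Reach x f p -> sat p f -> is_cell K d -> relint d q -> hull d p -> sat q f -> Reach x f q.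
Proof. intros [sg [Hs [H0 [H1 Hi]]]] Hp Hd Hdq Hdp Hq.
  destruct (seg_spath d p q (proj1 Hd) (proj2 Hd) Hdp Hdq) as [Hsg Hr].
  exists (concat sg (seg p q)). split; [apply concat_spath; auto; rewrite seg_0; auto|].
  split; [rewrite concat_0; auto|split; [rewrite concat_1 seg_1; auto|]].
  intros t Ht. destruct (Rtotal_order t (1/2)) as [Hlt|[Heq|Hgt]].
  - rewrite concat_l; [|lra]. apply Hi; lra.
  - rewrite Heq concat_half H1; auto.
  - rewrite concat_r; [|lra]. apply (cell_hom f d q); auto. apply Hr; lra.
Qed.

Lemma step_bwd x f p d q : Reach x f q -> sat q f -> is_cell K d -> relint d q -> hull d p -> Reach x f p.
Proof. intros [sg [Hs [H0 [H1 Hi]]]] Hq Hd Hdq Hdp.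
  destruct (seg_spath_rev d p q (proj1 Hd) (proj2 Hd) Hdp Hdq) as [Hsg Hr].
  exists (concat sg (seg q p)). split; [apply concat_spath; auto; rewrite seg_0; auto|].
  split; [rewrite concat_0; auto|split; [rewrite concat_1 seg_1; auto|]].
  intros t Ht. destruct (Rtotal_order t (1/2)) as [Hlt|[Heq|Hgt]].
  - rewrite concat_l; [|lra]. apply Hi; lra.
  - rewrite Heq concat_half H1; auto.
  - rewrite concat_r; [|lra]. apply (cell_hom f d q); auto. apply Hr; lra.
Qed.

Lemma gamma_spath x f g : sat x (FGamma f g) ->
  exists sigma, simplicial_path K sigma /\ sigma 0 = x /\ (forall t, 0 < t < 1 -> sat (sigma t) f) /\ sat (sigma 1) g.
Proof.
  intros [pi [Hpi [Hpi0 [Hpif Hpig]]]].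
  set S := fun t => Reach x f (pi t).
  have Hx : polyhedron K x by rewrite -Hpi0; apply (proj1 Hpi); lra.
  have Ha : exists da, 0 < da /\ forall t, 0 < t < da -> t < 1 -> S t.
  { destruct (local_lemma x Hx) as [e [He HL]].
    destruct (proj2 Hpi 0 ltac:(lra) e He) as [dl [Hdl Hdl']].
    exists dl; split; auto. intros t Ht Ht1.
    have Hq : polyhedron K (pi t) by apply (proj1 Hpi); lra.
    have Hqx : close (pi t) x e. { rewrite -Hpi0. apply Hdl'; [lra|]. rewrite Rminus_0_r Rabs_right; lra. }
    destruct (HL _ Hq Hqx) as [d [Hd [Hdq Hdx]]].
    apply (reach_seg x f d); auto. apply Hpif; lra. }
  have Hb : forall t, 0 < t <= 1 -> exists db, 0 < db /\ forall t', 0 < t' < 1 -> Rabs (t' - t) < db -> S t' -> S t.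
  { intros t Ht. have Hpt : polyhedron K (pi t) by apply (proj1 Hpi); lra.
    destruct (local_lemma (pi t) Hpt) as [e [He HL]].
    destruct (proj2 Hpi t ltac:(lra) e He) as [dl [Hdl Hdl']].
    exists dl; split; auto. intros t' Ht' Htt Hs.
    have Hq : polyhedron K (pi t') by apply (proj1 Hpi); lra.
    destruct (HL _ Hq (Hdl' t' ltac:(lra) Htt)) as [d [Hd [Hdq Hdx]]].
    apply (step_bwd x f (pi t) d (pi t')); auto; apply Hpif; lra. }
  have Hc : forall t, 0 < t < 1 -> S t -> exists dc, 0 < dc /\ forall t', 0 < t' < 1 -> Rabs (t' - t) < dc -> S t'.
  { intros t Ht Hst. have Hpt : polyhedron K (pi t) by apply (proj1 Hpi); lra.
    destruct (local_lemma (pi t) Hpt) as [e [He HL]].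
    destruct (proj2 Hpi t ltac:(lra) e He) as [dl [Hdl Hdl']].
    exists dl; split; auto. intros t' Ht' Htt.
    have Hq : polyhedron K (pi t') by apply (proj1 Hpi); lra.
    destruct (HL _ Hq (Hdl' t' ltac:(lra) Htt)) as [d [Hd [Hdq Hdx]]].
    apply (step_fwd x f (pi t) d (pi t')); auto; apply Hpif; lra. }
  set A := fun u => 0 <= u <= 1 /\ forall v, 0 < v <= u -> v < 1 -> S v.
  have HA0 : A 0 by split; [lra|intros; lra].
  have HAb : bound A by exists 1; intros u [Hu _]; lra.
  destruct (completeness A HAb (ex_intro _ 0 HA0)) as [T [HT1 HT2]].
  have Claim1 : forall v, 0 < v < T -> v < 1 -> S v.
  { intros v Hv Hv1. apply NNPP; intros Hn.
    have : T <= v. { apply HT2. intros a Haa. destruct (Rle_lt_dec a v) as [|Hlt]; auto.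
      exfalso; apply Hn. apply (proj2 Haa); lra. } lra. }
  have HT1' : T <= 1 by apply HT2; intros u [Hu _]; lra.
  destruct Ha as [da [Hda Hda']].
  have HTpos : 0 < T.
  { set u := Rmin (da / 2) (1 / 2).
    have Hu : 0 < u <= 1 / 2 by split; [apply Rmin_glb_lt; lra|apply Rmin_r].
    have Hu2 : u < da by have := Rmin_l (da / 2) (1 / 2); rewrite -/u; lra.
    have : A u. { split; [lra|]. intros v Hv Hv1. apply Hda'; lra. }
    intros HAu. have := HT1 u HAu. lra. }
  have HT : T = 1.
  { destruct (Req_dec T 1) as [|HTn]; auto. exfalso.
    have HTl : T < 1 by lra.
    destruct (Hb T ltac:(lra)) as [db [Hdb Hdb']].
    set v := Rmax (T / 2) (T - db / 2).
    have Hv : T / 2 <= v /\ T - db / 2 <= v /\ v < T.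
    { split; [apply Rmax_l|split; [apply Rmax_r|]]. rewrite /v. apply Rmax_lub_lt; lra. }
    have HST : S T. { apply (Hdb' v); [lra| |apply Claim1; lra]. rewrite Rabs_left; lra. }
    destruct (Hc T ltac:(lra) HST) as [dc [Hdc Hdc']].
    set u := T + Rmin dc (1 - T) / 2.
    have Hm1 := Rmin_l dc (1 - T). have Hm2 := Rmin_r dc (1 - T).
    have Hm0 : 0 < Rmin dc (1 - T) by apply Rmin_glb_lt; lra.
    have : A u.
    { split; [rewrite /u; lra|]. intros w Hw Hw1.
      destruct (Rtotal_order w T) as [Hlt|[Heq|Hgt]].
      - apply Claim1; lra.
      - rewrite Heq; auto.
      - apply Hdc'; [lra|]. rewrite Rabs_right; rewrite /u in Hw; lra. }
    intros HAu. have := HT1 u HAu. rewrite /u. lra. }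
  destruct (Hb 1 ltac:(lra)) as [db [Hdb Hdb']].
  set v := Rmax (1 / 2) (1 - db / 2).
  have Hv : 1 / 2 <= v /\ 1 - db / 2 <= v /\ v < 1.
  { split; [apply Rmax_l|split; [apply Rmax_r|]]. rewrite /v. apply Rmax_lub_lt; lra. }
  have HS1 : S 1. { apply (Hdb' v); [lra| |apply Claim1; lra]. rewrite Rabs_left; lra. }
  destruct HS1 as [sg [Hs [H0 [H1 Hi]]]]. exists sg. split; auto. split; auto. split; auto. rewrite H1; auto.
Qed.

Lemma box_transfer x y f : polyhedron K y ->
  (forall piy, simplicial_path K piy -> piy 0 = y -> exists pix, simplicial_path K pix /\ pix 0 = x /\
     forall t, 0 <= t <= 1 -> (sat (pix t) f <-> sat (piy t) f)) ->
  sat x (FBox f) -> sat y (FBox f).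
Proof.
  intros Hy Htr [Hpx [ex [Hex Hex']]]. split; auto.
  apply NNPP; intros Hn.
  destruct (local_lemma y Hy) as [e [He HL]].
  have [z [Hz1 [Hz2 Hz3]]] : exists z, polyhedron K z /\ close z y e /\ ~ sat z f.
  { apply NNPP; intros Hn2. apply Hn. exists e; split; auto. intros z Hz Hzc.
    apply NNPP; intros Hn3. apply Hn2; exists z; auto. }
  destruct (HL z Hz1 Hz2) as [d [Hd [Hdz Hdy]]].
  destruct (seg_spath d y z (proj1 Hd) (proj2 Hd) Hdy Hdz) as [Hs Hr].
  destruct (Htr (seg y z) Hs (seg_0 y z)) as [pix [Hpix [Hpix0 Hiff]]].
  destruct (proj2 (proj1 Hpix) 0 ltac:(lra) ex Hex) as [dl [Hdl Hdl']].
  set t := Rmin (dl / 2) 1.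
  have Ht : 0 < t <= 1 by split; [apply Rmin_glb_lt; lra|apply Rmin_r].
  have Htd : t < dl by have := Rmin_l (dl / 2) 1; rewrite -/t; lra.
  have : sat (pix t) f.
  { apply Hex'; [apply (proj1 (proj1 Hpix)); lra|]. rewrite -Hpix0. apply Hdl'; [lra|].
    rewrite Rminus_0_r Rabs_right; lra. }
  intros Hft. apply (Hiff t ltac:(lra)) in Hft. apply Hz3. apply (cell_hom f d (seg y z t)); auto. Qed.

Lemma gamma_transfer x y f g :
  (forall pix, simplicial_path K pix -> pix 0 = x -> exists piy, simplicial_path K piy /\ piy 0 = y /\
     forall t, 0 <= t <= 1 -> (sat (pix t) f <-> sat (piy t) f) /\ (sat (pix t) g <-> sat (piy t) g)) ->
  sat x (FGamma f g) -> sat y (FGamma f g).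
Proof. intros Htr Hx. destruct (gamma_spath x f g Hx) as [sg [Hs [H0 [Hi H1]]]].
  destruct (Htr sg Hs H0) as [piy [Hpy [Hpy0 Hiff]]].
  exists piy. split; [apply Hpy|split; [auto|split]].
  - intros t Ht. apply (Hiff t ltac:(lra)). apply Hi; auto.
  - apply (Hiff 1 ltac:(lra)); auto. Qed.

Lemma main_lemma (Rel : Pt -> Pt -> Prop)
  (HRel : forall x y, Rel x y -> polyhedron K x /\ polyhedron K y)
  (Hbisim : simplicial_bisim K V Rel) :
  forall phi : form AP, forall x y, Rel x y -> (sat x phi <-> sat y phi).
Proof.
  induction phi as [|p|f IHf|f IHf g IHg|f IHf|f IHf g IHg]; intros x y Hxy.
  - simpl; tauto.
  - simpl. apply (proj1 (Hbisim x y Hxy)).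
  - simpl. have := IHf x y Hxy. tauto.
  - simpl. have := IHf x y Hxy. have := IHg x y Hxy. tauto.
  - destruct (Hbisim x y Hxy) as [_ [H2 H3]]. split.
    + apply box_transfer; [apply (HRel x y Hxy)|].
      intros piy Hpy Hpy0. destruct (H3 piy Hpy Hpy0) as [pix [Hpx [Hpx0 HR]]].
      exists pix; split; [exact Hpx|split; [exact Hpx0|]]. intros t Ht; apply IHf; auto.
    + apply box_transfer; [apply (HRel x y Hxy)|].
      intros pix Hpx Hpx0. destruct (H2 pix Hpx Hpx0) as [piy [Hpy [Hpy0 HR]]].
      exists piy; split; [exact Hpy|split; [exact Hpy0|]]. intros t Ht; symmetry; apply IHf; auto.
  - destruct (Hbisim x y Hxy) as [_ [H2 H3]]. split.
    + apply gamma_transfer. intros pix Hpx Hpx0. destruct (H2 pix Hpx Hpx0) as [piy [Hpy [Hpy0 HR]]].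
      exists piy; split; [exact Hpy|split; [exact Hpy0|]]. intros t Ht; split; [apply IHf|apply IHg]; auto.
    + apply gamma_transfer. intros piy Hpy Hpy0. destruct (H3 piy Hpy Hpy0) as [pix [Hpx [Hpx0 HR]]].
      exists pix; split; [exact Hpx|split; [exact Hpx0|]]. intros t Ht; split; symmetry; [apply IHf|apply IHg]; auto.
Qed.

End Geo.

Theorem mainTheorem14 (m : nat) (AP : finType) (K : list (simplex m))
  (V : AP -> Point m -> Prop)
  (HK : simplicial_complex K) (HV : coherent K V)
  (Rel : Point m -> Point m -> Prop)
  (HRel : forall x y, Rel x y -> polyhedron K x /\ polyhedron K y)
  (Hbisim : simplicial_bisim K V Rel) :
  forall x y, Rel x y -> forall phi : form AP, sat K V x phi <-> sat K V y phi.
Proof. intros x y Hxy phi. exact (main_lemma m K HK AP V HV Rel HRel Hbisim phi x y Hxy). Qed.
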